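(* In the production planning setting described in the context, fix $\pmb{x}\in\mathbb{X}$, assume $\Gamma^c\in\mathbb{Z}_+$ and $\Delta_t\in\mathbb{Z}_+$ for all $t\in[T]$, and let $G$ with arc costs be as defined in the context. Then for every real $C^*$: a solution with cost $C^*$ is optimal for the problem $$\max\ \sum_{t\in[T]}\max\{f_I(X_t,\widehat{D}_t-\delta_t),f_B(X_t,\widehat{D}_t+\delta_t)\}\ \text{ s.t. }\ \sum_{t\in[T]}\delta_t\le\Gamma^c,\ 0\le\delta_t\le\Delta_t\ (t\in[T])$$ if and only if there is a longest $\mathfrak{s}$-$\mathfrak{t}$ path in $G$ with length $C^*$.
   Context: There are $T\ge 1$ periods, $[T]=\{1,\dots,T\}$. Given are costs $c^P,c^I,c^B$, a selling price $b^P$, and a set $\mathbb{X}\subseteq\mathbb{R}^T_+$ of feasible production plans described by finitely many linear constraints; for a plan $X_t=\sum_{i\in[t]}x_i$. For $t\in[T-1]$ let $f_I(X_t,D_t)=c^I(X_t-D_t)$, $f_B(X_t,D_t)=c^B(D_t-X_t)$; for $t=T$ let $f_I(X_T,D_T)=c^I(X_T-D_T)+c^PX_T-b^PD_T$, $f_B(X_T,D_T)=c^B(D_T-X_T)+c^PX_T-b^PX_T$. Nominal cumulative demands $\widehat{D}_t\ge0$ are nondecreasing, deviations $0\le\Delta_t\le\widehat{D}_t$, budget $\Gamma^c$. The directed layered graph $G$ has layers $V_0=\{\mathfrak{s}\}$ with $\mathfrak{s}=0^0$, $V_t=\{t^0,t^1,\dots,t^{\Gamma^c}\}$ for $t\in[T]$,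 and $V_{T+1}=\{\mathfrak{t}\}$. For $t\in[T]$, each node $(t-1)^{\delta}\in V_{t-1}$ and each integer $\delta_t\in\{0,\dots,\Delta_t\}$ with $\delta+\delta_t\le\Gamma^c$, there is an arc $((t-1)^{\delta},t^{\delta+\delta_t})$ with cost $\max\{f_I(X_t,\widehat{D}_t-\delta_t),f_B(X_t,\widehat{D}_t+\delta_t)\}$; every node of $V_T$ is joined to $\mathfrak{t}$ by an arc of cost $0$. The length of a path is the sum of its arc costs. *)

(* Defs.v *)
From Stdlib Require Import List.
From mathcomp Require Import all_boot all_order all_algebra.
Set Implicit Arguments. Unset Strict Implicit. Unset Printing Implicit Defensive.
Import Order.TTheory GRing.Theory Num.Theory.
Local Open Scope ring_scope.

Section Model.
Variable R : realFieldType.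
Variable T : nat.                       (* number of periods, periods are 1..T *)
Variables cP cI cB bP : R.
Variable x : nat -> R.
Variable Dh : nat -> R.                 (* nominal cumulative demands *)
Variable Delta : nat -> nat.
Variable Gamma : nat.

(* feasible set of plans: x >= 0 and finitely many linear constraints
   sum_{i in [T]} a_i x_i <= beta, given as a list of pairs (a, beta) *)
Definition in_Xset (cstr : seq ((nat -> R) * R)) (y : nat -> R) : Prop :=
  (forall i, (1 <= i <= T)%N -> 0 <= y i) /\
  (forall c, In c cstr -> \sum_(1 <= i < T.+1) c.1 i * y i <= c.2).

Definition Xc (t : nat) : R := \sum_(1 <= i < t.+1) x i.

Definition fI (t : nat) (X D : R) : R :=
  if (t < T)%N then cI * (X - D) else cI * (X - D) + cP * X - bP * D.
Definition fB (t : nat) (X D : R) : R :=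
  if (t < T)%N then cB * (D - X) else cB * (D - X) + cP * X - bP * X.

Definition term (t : nat) (d : R) : R :=
  Num.max (fI t (Xc t) (Dh t - d)) (fB t (Xc t) (Dh t + d)).

Definition obj (delta : nat -> R) : R := \sum_(1 <= t < T.+1) term t (delta t).

Definition feasible (delta : nat -> R) : Prop :=
  \sum_(1 <= t < T.+1) delta t <= Gamma%:R /\
  (forall t, (1 <= t <= T)%N -> 0 <= delta t <= (Delta t)%:R).

Definition optimal_value (C : R) : Prop :=
  (exists delta, feasible delta /\ obj delta = C) /\
  (forall delta, feasible delta -> obj delta <= C).

(* nodes: mid t k stands for t^k (layer V_t); source s = 0^0 = mid 0 0;
   snk is the sink t. *)
Inductive node := mid of nat & nat | snk.

Definition src : node := mid 0 0.

(* arc cost; None means there is no arc. Since the arc ((t-1)^d, t^(d+dt))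
   is determined by its endpoints, arcs are given by pairs of nodes. *)
Definition arc (u v : node) : option R :=
  match u, v with
  | mid s d, mid t d' =>
      if [&& s.+1 == t, (1 <= t <= T)%N, (s == 0%N) ==> (d == 0%N),
             (d <= d')%N, (d' <= Gamma)%N & (d' - d <= Delta t)%N]
      then Some (term t (d' - d)%:R) else None
  | mid s d, snk =>
      if [&& s == T, (d <= Gamma)%N & (s == 0%N) ==> (d == 0%N)]
      then Some 0 else None
  | snk, _ => None
  end.

Fixpoint plen (u : node) (p : seq node) : option R :=
  match p with
  | [::] => Some 0
  | v :: p' =>
      match arc u v, plen v p' with
      | Some c, Some l => Some (c + l)
      | _, _ => None
      end
  end.

(* p (the nodes after s) is an s-t path in G of length L *)
Definition st_path (p : seq node) (L : R) : Prop :=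
  plen src p = Some L /\ last src p = snk.

Definition longest_path_length (C : R) : Prop :=
  (exists p, st_path p C) /\ (forall p L, st_path p L -> L <= C).

End Model.

(* Main.v *)
Require Import Defs.
From mathcomp Require Import all_boot all_order all_algebra.
From mathcomp Require Import ring lra zify.
From Stdlib Require Import Classical.
Set Implicit Arguments. Unset Strict Implicit. Unset Printing Implicit Defensive.
Import Order.TTheory GRing.Theory Num.Theory.
Local Open Scope ring_scope.

Definition conv (R : realFieldType) (f : R -> R) :=
  forall u w l : R, 0 <= l <= 1 -> f ((1 - l) * u + l * w) <= (1 - l) * f u + l * f w.

Lemma conv_max (R : realFieldType) (f g : R -> R) :
  conv f -> conv g -> conv (fun d => Num.max (f d) (g d)).
Proof.
move=> hf hg u w l hl; have h1 := hf u w l hl; have h2 := hg u w l hl.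
have a1 : f u <= Num.max (f u) (g u) by rewrite le_max lexx.
have a2 : g u <= Num.max (f u) (g u) by rewrite le_max lexx orbT.
have b1 : f w <= Num.max (f w) (g w) by rewrite le_max lexx.
have b2 : g w <= Num.max (f w) (g w) by rewrite le_max lexx orbT.
case/andP: hl => l0 l1.
rewrite ge_max; apply/andP; split; nra.
Qed.

Lemma conv_term (R : realFieldType) T cP cI cB bP (x Dh : nat -> R) t :
  conv (term T cP cI cB bP x Dh t).
Proof.
apply: conv_max => u w l _; rewrite /fI /fB; case: ifP => _;
  rewrite le_eqVlt; apply/orP; left; apply/eqP; ring.
Qed.

Definition flo (R : realFieldType) (N : nat) (d : R) : nat :=
  \sum_(1 <= k < N.+1) nat_of_bool ((k%:R : R) <= d)%R.

Lemma flo_top (R : realFieldType) (N : nat) (d : R) : N%:R <= d -> flo N d = N.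
Proof.
move=> hd; rewrite /flo (eq_big_nat _ _ (F2 := fun _ => 1%N)).
  by rewrite sum_nat_const_nat subn1 muln1.
move=> k /andP [_ hk]; have h : (k%:R : R) <= N%:R by rewrite ler_nat -ltnS.
by rewrite (le_trans h hd).
Qed.

Lemma flo_spec (R : realFieldType) (N : nat) (d : R) : 0 <= d -> d <= N%:R ->
  [/\ (flo N d <= N)%N, (flo N d)%:R <= d & d < (flo N d).+1%:R].
Proof.
elim: N d => [|N IH] d d0 dN.
  rewrite /flo big_geq //; have -> : d = 0 by apply/le_anti; rewrite d0 dN.
  by rewrite ltr01 lexx.
have -> : flo N.+1 d = (flo N d + nat_of_bool ((N.+1%:R : R) <= d)%R)%N.
  by rewrite /flo big_nat_recr.
case: (lerP d N%:R) => hdN.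
  have [a b c] := IH d d0 hdN.
  have -> : (N.+1%:R <= d) = false.
    by apply/negbTE; rewrite -ltNge (le_lt_trans hdN) // ltr_nat.
  by rewrite addn0 (leq_trans a).
rewrite flo_top; last exact: ltW.
case: (lerP N.+1%:R d) => h /=.
  have -> : d = N.+1%:R by apply/le_anti; rewrite dN h.
  by rewrite addn1 lexx ltr_nat.
by rewrite addn0 leqnSn (ltW hdN).
Qed.

Lemma flo_nat (R : realFieldType) (N m : nat) : (m <= N)%N -> flo N (m%:R : R) = m.
Proof.
move=> hm; have hmN : (m%:R : R) <= N%:R by rewrite ler_nat.
have [a b c] := flo_spec (ler0n _ _) hmN.
move: b c; rewrite ler_nat ltr_nat ltnS => b c; apply/eqP; by rewrite eqn_leq b c.
Qed.

Definition objg (R : realFieldType) (g : nat -> R -> R) (T : nat) (d : nat -> R) : R :=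
  \sum_(1 <= t < T.+1) g t (d t).

Definition frac (R : realFieldType) (Delta : nat -> nat) (d : nat -> R) (t : nat) : bool :=
  d t != (flo (Delta t) (d t))%:R.

Definition cnt (R : realFieldType) (T : nat) (Delta : nat -> nat) (d : nat -> R) : nat :=
  \sum_(1 <= t < T.+1) nat_of_bool (frac Delta d t).

Lemma move_conv (R : realFieldType) (g : nat -> R -> R) (hg : forall t, conv (g t))
  T (d c : nat -> R) (p q : R) : 0 < p -> 0 < q ->
  objg g T d <= Num.max (objg g T (fun t => d t + (- p) * c t))
                        (objg g T (fun t => d t + q * c t)).
Proof.
move=> p0 q0.
set Phi := fun s => objg g T (fun t => d t + s * c t).
have cv : conv Phi.
  move=> u w l hl; rewrite /Phi /objg !mulr_sumr -big_split /=.
  apply: ler_sum => t _.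
  have -> : d t + ((1 - l) * u + l * w) * c t =
            (1 - l) * (d t + u * c t) + l * (d t + w * c t) by ring.
  exact: hg.
have e0 : objg g T d = Phi 0.
  by rewrite /Phi /objg; apply: eq_bigr => t _; rewrite mul0r addr0.
have pq0 : 0 < p + q by rewrite addr_gt0.
set l := p / (p + q).
have l0 : 0 <= l by rewrite divr_ge0 // ltW.
have l1 : l <= 1 by rewrite ler_pdivrMr // mul1r lerDl ltW.
have ec : (1 - l) * (- p) + l * q = 0.
  rewrite /l; field; by rewrite lt0r_neq0.
have := cv (- p) q l; rewrite l0 l1 ec -e0 => /(_ isT) h.
have a1 : Phi (- p) <= Num.max (Phi (- p)) (Phi q) by rewrite le_max lexx.
have a2 : Phi q <= Num.max (Phi (- p)) (Phi q) by rewrite le_max lexx orbT.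
rewrite -/(Phi (-p)) -/(Phi q); nra.
Qed.

Lemma cnt_lt (R : realFieldType) T Delta (d d' : nat -> R) k :
  (forall t, frac Delta d' t -> frac Delta d t) -> (1 <= k <= T)%N ->
  ~~ frac Delta d' k -> frac Delta d k -> (cnt T Delta d' < cnt T Delta d)%N.
Proof.
move=> h hk n' n; rewrite /cnt.
have kin : k \in index_iota 1 T.+1 by rewrite mem_index_iota ltnS.
rewrite (bigD1_seq k) ?iota_uniq //= (bigD1_seq k (r := index_iota 1 T.+1)) ?iota_uniq //=.
rewrite (negbTE n') n add0n add1n ltnS; apply: leq_sum => i _.
by case: (boolP (frac Delta d' i)) => [/h -> | _].
Qed.

Lemma sum_shift (R : realFieldType) T (d c : nat -> R) s :
  \sum_(1 <= t < T.+1) (d t + s * c t) = \sum_(1 <= t < T.+1) d t + s * \sum_(1 <= t < T.+1) c t.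
Proof. by rewrite big_split /= mulr_sumr. Qed.

Lemma ind_sum (R : realFieldType) T i : (1 <= i <= T)%N ->
  \sum_(1 <= t < T.+1) ((t == i)%:R : R) = 1.
Proof.
move=> hi; have iin : i \in index_iota 1 T.+1 by rewrite mem_index_iota ltnS.
rewrite (bigD1_seq i) ?iota_uniq //= eqxx big1 ?addr0 // => t /negbTE -> //.
Qed.

Lemma nfrac (R : realFieldType) Delta (d : nat -> R) k m :
  (m <= Delta k)%N -> d k = m%:R -> ~~ frac Delta d k.
Proof. by move=> hm hd; rewrite /frac hd flo_nat // eqxx. Qed.

Lemma frac_info (R : realFieldType) T Delta Gamma (d : nat -> R) i :
  feasible T Delta Gamma d -> (1 <= i <= T)%N -> frac Delta d i ->
  [/\ (flo (Delta i) (d i))%:R < d i, d i < (flo (Delta i) (d i)).+1%:R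
    & ((flo (Delta i) (d i)).+1 <= Delta i)%N].
Proof.
move=> [_ fb] hi fi; have /andP [d0 dD] := fb i hi.
have [a b c] := flo_spec d0 dD.
have b' : (flo (Delta i) (d i))%:R < d i by rewrite lt_neqAle b andbT eq_sym.
split=> //; rewrite ltn_neqAle a andbT; apply/negP => /eqP e.
by move: b'; rewrite e => /(le_lt_trans dD); rewrite ltxx.
Qed.

Lemma step (R : realFieldType) (g : nat -> R -> R) (hg : forall t, conv (g t)) T Delta Gamma
  (d : nat -> R) i : feasible T Delta Gamma d -> (1 <= i <= T)%N -> frac Delta d i ->
  exists d', feasible T Delta Gamma d' /\ objg g T d <= objg g T d' /\
             (cnt T Delta d' < cnt T Delta d)%N.
Proof.
move=> fd hi fi.
suff [c [p [q [p0 [q0 H]]]]] : exists (c : nat -> R) (p q : R), 0 < p /\ 0 < q /\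
   forall s, s = - p \/ s = q -> feasible T Delta Gamma (fun t => d t + s * c t) /\
      (cnt T Delta (fun t => (d t + s * c t)%R) < cnt T Delta d)%N.
  have := move_conv hg T d c p0 q0; rewrite le_max => /orP [h|h].
    have [f1 f2] := H (- p) (or_introl erefl); by exists (fun t => d t + (- p) * c t).
  have [f1 f2] := H q (or_intror erefl); by exists (fun t => d t + q * c t).
have [fi1 fi2 fi3] := frac_info fd hi fi.
have fd' := fd; case: fd' => fsum fbd.
set a := flo (Delta i) (d i) in fi1 fi2 fi3.
have a0 : (0 : R) <= a%:R by [].
have aD : (a.+1%:R : R) <= (Delta i)%:R by rewrite ler_nat.
have ea : (a.+1%:R : R) = a%:R + 1 by rewrite natr1.
case: (boolP (has (fun j => (j != i) && frac Delta d j) (index_iota 1 T.+1))) =>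
   [/hasP [j jin /andP [ji fj]] | hn].
-
  have hj : (1 <= j <= T)%N by move: jin; rewrite mem_index_iota ltnS.
  have [fj1 fj2 fj3] := frac_info fd hj fj.
  set b := flo (Delta j) (d j) in fj1 fj2 fj3.
  have b0 : (0 : R) <= b%:R by [].
  have bD : (b.+1%:R : R) <= (Delta j)%:R by rewrite ler_nat.
  have eb : (b.+1%:R : R) = b%:R + 1 by rewrite natr1.
  have ij : i != j by rewrite eq_sym.
  set p := Num.min (d i - a%:R) (b.+1%:R - d j).
  set q := Num.min (a.+1%:R - d i) (d j - b%:R).
  have p0 : 0 < p by rewrite lt_min !subr_gt0 fi1 fj2.
  have q0 : 0 < q by rewrite lt_min !subr_gt0 fi2 fj1.
  have p1 : p <= d i - a%:R by rewrite ge_min lexx.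
  have p2 : p <= b.+1%:R - d j by rewrite ge_min lexx orbT.
  have q1 : q <= a.+1%:R - d i by rewrite ge_min lexx.
  have q2 : q <= d j - b%:R by rewrite ge_min lexx orbT.
  exists (fun t => (t == i)%:R - (t == j)%:R), p, q; do 2 split => //.
  move=> s hs.
  have sl : - p <= s /\ s <= q by case: hs => ->; split; lra.
  case: sl => sl su.
  have vi : d i + s * ((i == i)%:R - (i == j)%:R) = d i + s.
    by rewrite eqxx (negbTE ij) /= subr0 mulr1.
  have vj : d j + s * ((j == i)%:R - (j == j)%:R) = d j - s.
    by rewrite eqxx (negbTE ji) /= sub0r mulrN1.
  have vt : forall t, t != i -> t != j -> d t + s * ((t == i)%:R - (t == j)%:R) = d t.
    by move=> t ti tj; rewrite (negbTE ti) (negbTE tj) /= subrr mulr0 addr0.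
  have pw : forall t, frac Delta (fun t => d t + s * ((t == i)%:R - (t == j)%:R)) t ->
                      frac Delta d t.
    move=> t; case: (eqVneq t i) => [-> | ti] //; case: (eqVneq t j) => [-> | tj] //.
    by rewrite /frac /= vt.
  split.
    split.
      by rewrite sum_shift sumrB !ind_sum // subrr mulr0 addr0.
    move=> t ht /=; case: (eqVneq t i) => [-> | ti].
      by rewrite (negbTE ij) /= subr0 mulr1; apply/andP; split; lra.
    case: (eqVneq t j) => [-> | tj].
      by rewrite /= sub0r mulrN1; apply/andP; split; lra.
    by rewrite /= subrr mulr0 addr0; apply: fbd.
  case: hs => hs.
  + move: hs; rewrite /p minEle; case: ifP => _ hs.
      apply: (cnt_lt (k := i)) => //; apply: (nfrac (m := a)) => /=.
        exact: ltnW.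
      by rewrite vi hs; ring.
    apply: (cnt_lt (k := j)) => //; apply: (nfrac (m := b.+1)) => //=.
    by rewrite vj hs; ring.
  + move: hs; rewrite /q minEle; case: ifP => _ hs.
      apply: (cnt_lt (k := i)) => //; apply: (nfrac (m := a.+1)) => //=.
      by rewrite vi hs; ring.
    apply: (cnt_lt (k := j)) => //; apply: (nfrac (m := b)) => /=.
      exact: ltnW.
    by rewrite vj hs; ring.
-
  have nf : forall t, (1 <= t <= T)%N -> t != i -> ~~ frac Delta d t.
    move=> t ht ti; apply/negP => ft; apply: (negP hn); apply/hasP; exists t.
      by rewrite mem_index_iota ltnS.
    by rewrite ti ft.
  exists (fun t => (t == i)%:R), (d i - a%:R), (a.+1%:R - d i).
  split; first by rewrite subr_gt0.
  split; first by rewrite subr_gt0.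
  move=> s hs.
  have vi : d i + s * (i == i)%:R = d i + s by rewrite eqxx /= mulr1.
  have vt : forall t, t != i -> d t + s * (t == i)%:R = d t.
    by move=> t ti; rewrite (negbTE ti) /= mulr0 addr0.
  have pw : forall t, frac Delta (fun t => d t + s * (t == i)%:R) t -> frac Delta d t.
    move=> t; case: (eqVneq t i) => [-> | ti] //.
    by rewrite /frac /= vt.
  have [m [hm hv]] : exists m, (m <= Delta i)%N /\ d i + s = m%:R.
    case: hs => ->; [exists a | exists a.+1]; split => //; try ring.
    exact: ltnW.
  split; last first.
    by apply: (cnt_lt (k := i)) => //; apply: (nfrac (m := m)) => //=; rewrite vi.
  split; last first.
    move=> t ht /=; case: (eqVneq t i) => [-> | ti].
      rewrite /= mulr1 hv; apply/andP; split; first by [].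
      by rewrite ler_nat.
    by rewrite /= mulr0 addr0; apply: fbd.
  rewrite sum_shift ind_sum // mulr1.
  case: hs => hs.
    rewrite hs; lra.
  set ds := fun t => d t + s * (t == i)%:R.
  have eq1 : \sum_(1 <= t < T.+1) ds t =
             (\sum_(1 <= t < T.+1) flo (Delta t) (ds t))%:R.
    rewrite natr_sum; apply: eq_big_nat => t ht.
    case: (eqVneq t i) => [-> | ti].
      by rewrite /ds vi hv flo_nat.
    have := nf t ht ti; rewrite /frac negbK => /eqP e.
    by rewrite /ds vt // {1}e.
  move: eq1; rewrite /ds sum_shift ind_sum // mulr1 => eq1.
  rewrite eq1 ler_nat -ltnS -(ltr_nat R) -natr1 -eq1; lra.
Qed.

Lemma feasible_ext (R : realFieldType) T Delta Gamma (d d' : nat -> R) :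
  (forall t, (1 <= t <= T)%N -> d t = d' t) ->
  feasible T Delta Gamma d -> feasible T Delta Gamma d'.
Proof.
move=> e [fs fb]; split.
  by rewrite -(eq_big_nat _ _ (F1 := d)) // => t; rewrite ltnS; apply: e.
by move=> t ht; rewrite -e //; apply: fb.
Qed.

Lemma objg_ext (R : realFieldType) (g : nat -> R -> R) T (d d' : nat -> R) :
  (forall t, (1 <= t <= T)%N -> d t = d' t) -> objg g T d = objg g T d'.
Proof. by move=> e; apply: eq_big_nat => t; rewrite ltnS => /e ->. Qed.

Lemma round (R : realFieldType) (g : nat -> R -> R) (hg : forall t, conv (g t)) T Delta Gamma
  (d : nat -> R) : feasible T Delta Gamma d ->
  exists n : nat -> nat, feasible T Delta Gamma (fun t => ((n t)%:R : R)) /\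
     objg g T d <= objg g T (fun t => (n t)%:R).
Proof.
move: d; suff H : forall k (d : nat -> R), (cnt T Delta d < k)%N -> feasible T Delta Gamma d ->
  exists n : nat -> nat, feasible T Delta Gamma (fun t => ((n t)%:R : R)) /\
     objg g T d <= objg g T (fun t => (n t)%:R).
  by move=> d; apply: (H (cnt T Delta d).+1).
elim=> [|k IH] d // hk fd.
case: (boolP (has (frac Delta d) (index_iota 1 T.+1))) => [/hasP [i iin fi] | /hasPn hn].
  have hi : (1 <= i <= T)%N by move: iin; rewrite mem_index_iota ltnS.
  have [d' [f' [o' c']]] := step hg fd hi fi.
  rewrite ltnS in hk.
  have [n [fn on]] := IH d' (leq_trans c' hk) f'.
  by exists n; split => //; apply: le_trans o' on.
have e : forall t, (1 <= t <= T)%N -> d t = (flo (Delta t) (d t))%:R.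
  move=> t ht; have := hn t; rewrite mem_index_iota ltnS => /(_ ht).
  by rewrite /frac negbK => /eqP.
exists (fun t => flo (Delta t) (d t)); split.
  exact: feasible_ext e fd.
by rewrite (objg_ext g e).
Qed.

Lemma seq_max (A : eqType) (R : realFieldType) (P : A -> Prop) (F : A -> R) (s : seq A) :
  (exists a, a \in s /\ P a) -> exists a, P a /\ forall b, b \in s -> P b -> F b <= F a.
Proof.
elim: s => [|a s IH]; first by case=> a [].
move=> [a0 [a0in pa0]]; case: (classic (exists b, b \in s /\ P b)) => [/IH [m [pm hm]] | hn].
  case: (classic (P a)) => pa.
    case: (lerP (F a) (F m)) => h.
      exists m; split => // b; rewrite in_cons => /orP [/eqP -> | bs] pb //.
      exact: hm.
    exists a; split => // b; rewrite in_cons => /orP [/eqP -> | bs] pb //.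
    exact: le_trans (hm b bs pb) (ltW h).
  exists m; split => // b; rewrite in_cons => /orP [/eqP -> | bs] pb //.
  exact: hm.
have pa : P a.
  move: a0in; rewrite in_cons => /orP [/eqP <- // | a0s].
  by case: hn; exists a0.
exists a; split => // b; rewrite in_cons => /orP [/eqP -> // | bs] pb.
by case: hn; exists b.
Qed.

Definition tofun T Gamma (f : {ffun 'I_T.+1 -> 'I_Gamma.+1}) : nat -> nat :=
  fun t => if (t <= T)%N then val (f (inord t)) else 0%N.

Lemma feas_le_Gamma (R : realFieldType) T Delta Gamma (n : nat -> nat) t :
  feasible T Delta Gamma (fun t => ((n t)%:R : R)) -> (1 <= t <= T)%N -> (n t <= Gamma)%N.
Proof.
move=> [fs _] ht; move: fs; rewrite -natr_sum ler_nat => fs.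
apply: leq_trans fs.
have tin : t \in index_iota 1 T.+1 by rewrite mem_index_iota ltnS.
by rewrite (bigD1_seq t) ?iota_uniq //= leq_addr.
Qed.

Lemma maxN (R : realFieldType) (g : nat -> R -> R) T Delta Gamma :
  exists n : nat -> nat, feasible T Delta Gamma (fun t => ((n t)%:R : R)) /\
   forall n' : nat -> nat, feasible T Delta Gamma (fun t => ((n' t)%:R : R)) ->
     objg g T (fun t => (n' t)%:R) <= objg g T (fun t => (n t)%:R).
Proof.
have := @seq_max _ R (fun f => feasible T Delta Gamma (fun t => ((tofun f t)%:R : R)))
  (fun f => objg g T (fun t => (tofun f t)%:R)) (enum {ffun 'I_T.+1 -> 'I_Gamma.+1}).
case.
  exists [ffun _ => ord0]; split; first by rewrite mem_enum.
  apply: (feasible_ext (d := fun _ => 0)).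
    by move=> t _; rewrite /tofun ffunE; case: ifP.
  split; first by rewrite big1.
  by move=> t _; rewrite lexx ler0n.
move=> m [pm hm]; exists (tofun m); split => // n' fn'.
set f' := [ffun i : 'I_T.+1 => (inord (n' i) : 'I_Gamma.+1)].
have e : forall t, (1 <= t <= T)%N -> ((n' t)%:R : R) = (tofun f' t)%:R.
  move=> t ht; rewrite /tofun ffunE; case/andP: (ht) => _ ->.
  rewrite inordK ?ltnS; last by case/andP: ht.
  have hg : (n' t <= Gamma)%N by exact: feas_le_Gamma fn' ht.
  have ht' : (t <= T)%N by case/andP: ht.
  apply/esym; congr (_%:R); rewrite ?inordK ?ltnS //; apply: inordK; by rewrite ltnS.
rewrite (objg_ext g e); apply: hm; first by rewrite mem_enum.
exact: feasible_ext e fn'.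
Qed.

Lemma path_to_N (R : realFieldType) T cP cI cB bP (x Dh : nat -> R) Delta Gamma :
  forall p s d L, plen T cP cI cB bP x Dh Delta Gamma (mid s d) p = Some L ->
  last (mid s d) p = snk ->
  exists n : nat -> nat, (\sum_(s.+1 <= t < T.+1) n t + d <= Gamma)%N /\
    (forall t, (s < t <= T)%N -> (n t <= Delta t)%N) /\
    L = \sum_(s.+1 <= t < T.+1) term T cP cI cB bP x Dh t (n t)%:R.
Proof.
elim=> [|v p IH] s d L //=.
case: v => [t d'|] /=.
  case: ifP => // hc; case E: plen => [l|] // [<-] hl.
  have [n' [h1 [h2 h3]]] := IH t d' l E hl.
  have st : t = s.+1 by lia.
  have ht : (t <= T)%N by lia.
  subst t.
  exists (fun k => if k == s.+1 then (d' - d)%N else n' k).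
  rewrite big_ltn ?ltnS // eqxx.
  rewrite (eq_big_nat _ _ (F2 := n')); last by move=> k hk; have -> : (k == s.+1) = false by lia.
  split; first lia.
  split.
    move=> k hk; case: (eqVneq k s.+1) => [-> | ks]; first lia.
    apply: h2; lia.
  rewrite big_ltn ?ltnS // eqxx h3; congr (_ + _).
  apply: eq_big_nat => k hk; have -> : (k == s.+1) = false by lia.
  by [].
case: ifP => // hc.
case: p IH => [|w p'] IH //= [<-] _.
have sT : s = T by lia.
subst s.
exists (fun _ => 0%N); rewrite big_geq //; split; first lia.
split; first by move=> t; lia.
by rewrite big_geq // addr0.
Qed.

Lemma N_to_path (R : realFieldType) T cP cI cB bP (x Dh : nat -> R) Delta Gamma (n : nat -> nat) :
  forall k s d, (s + k = T)%N -> (d + \sum_(s.+1 <= t < T.+1) n t <= Gamma)%N ->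
  (s == 0)%N ==> (d == 0)%N -> (forall t, (s < t <= T)%N -> (n t <= Delta t)%N) ->
  exists p, plen T cP cI cB bP x Dh Delta Gamma (mid s d) p =
     Some (\sum_(s.+1 <= t < T.+1) term T cP cI cB bP x Dh t (n t)%:R) /\
     last (mid s d) p = snk.
Proof.
elim=> [|k IH] s d.
  rewrite addn0 => <- hG h0 _; exists [:: snk]; rewrite /= !big_geq //.
  rewrite big_geq // addn0 in hG.
  by rewrite eqxx hG h0 /= addr0.
move=> hk hG h0 hD.
have hs : (s < T)%N by lia.
rewrite big_ltn ?ltnS // in hG.
have [p' [h1 h2]] := IH s.+1 (d + n s.+1)%N ltac:(lia) ltac:(lia) isT
  ltac:(move=> t ht; apply: hD; lia).
exists (mid s.+1 (d + n s.+1) :: p'); split => //=.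
rewrite ifT; last by have := hD s.+1; lia.
by rewrite h1 addKn big_ltn ?ltnS.
Qed.

Theorem proposition2 (R : realFieldType) (T : nat) (hT : (1 <= T)%N)
  (cP cI cB bP : R) (cstr : seq ((nat -> R) * R)) (x : nat -> R)
  (Dh : nat -> R) (Delta : nat -> nat) (Gamma : nat)
  (hx : in_Xset T cstr x)
  (hD0 : forall t, (1 <= t <= T)%N -> 0 <= Dh t)
  (hDmono : forall s t, (1 <= s)%N -> (s <= t)%N -> (t <= T)%N -> Dh s <= Dh t)
  (hDelta : forall t, (1 <= t <= T)%N -> (Delta t)%:R <= Dh t) :
  forall Cstar : R,
    optimal_value T cP cI cB bP x Dh Delta Gamma Cstar <->
    longest_path_length T cP cI cB bP x Dh Delta Gamma Cstar.
Proof.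
move=> C.
pose g := term T cP cI cB bP x Dh.
have hg : forall t, conv (g t) by move=> t; apply: conv_term.
have [ns [fns hns]] := maxN g T Delta Gamma.
pose M := objg g T (fun t => (ns t)%:R).
have key1 : forall d, feasible T Delta Gamma d -> objg g T d <= M.
  move=> d fd; have [n [fn on]] := round hg fd; exact: le_trans on (hns n fn).
have pathN : forall p L, st_path T cP cI cB bP x Dh Delta Gamma p L ->
    exists n : nat -> nat, feasible T Delta Gamma (fun t => ((n t)%:R : R)) /\
      L = objg g T (fun t => (n t)%:R).
  move=> p L [h1 h2]; have [n [a [b c]]] := path_to_N h1 h2.
  exists n; split; last exact: c.
  split; first by rewrite -natr_sum ler_nat; lia.
  move=> t ht; apply/andP; split; first exact: ler0n.
  rewrite ler_nat; apply: b; lia.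
have Npath : forall n : nat -> nat, feasible T Delta Gamma (fun t => ((n t)%:R : R)) ->
    exists p, st_path T cP cI cB bP x Dh Delta Gamma p (objg g T (fun t => (n t)%:R)).
  move=> n [fs fb]; rewrite -natr_sum ler_nat in fs.
  have [p [h1 h2]] := @N_to_path R T cP cI cB bP x Dh Delta Gamma n T 0 0 (add0n T)
     ltac:(lia) isT ltac:(move=> t ht; have := fb t ht; rewrite ler_nat => /andP [_ ->] //).
  by exists p; split.
have E1 : optimal_value T cP cI cB bP x Dh Delta Gamma C <-> C = M.
  split.
    move=> [[d [fd <-]] h]; apply/le_anti; rewrite key1 //=.
    exact: h _ fns.
  move=> ->; split; last exact: key1.
  by exists (fun t => (ns t)%:R); split.
have E2 : longest_path_length T cP cI cB bP x Dh Delta Gamma C <-> C = M.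
  split.
    move=> [[p hp] h]; have [n [fn eC]] := pathN p C hp.
    have [p' hp'] := Npath ns fns.
    apply/le_anti; rewrite (h p' M hp') andbT eC; exact: hns.
  move=> ->; split; first exact: Npath ns fns.
  by move=> p L hp; have [n [fn ->]] := pathN p L hp; apply: hns.
by rewrite E1 E2.
Qed.
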